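(* Let $E=(E_{m,n})_{m,n\in\mathbb N}$ be a nonnegative process adapted to a filtration sequence $\mathcal F$. The following are equivalent: (i) for every bounded integer sequence $r$, $E$ is an $r$-asymptotic e-process for $\mathcal P$ and $\mathcal F$; (ii) there exists an integer sequence $r=(r_m)_{m\in\mathbb N}$ with $r_m\to\infty$ as $m\to\infty$ such that $E$ is an $r$-asymptotic e-process for $\mathcal P$ and $\mathcal F$.
   Context: $(\Omega,\mathcal A)$ is a measurable space and $\mathcal P$ a set of probability measures on it. $\mathbb N=\{0,1,2,\dots\}$; an extended integer is an element of $\mathbb N\cup\{\infty\}$. Nonnegative random variables take values in $[0,\infty]$, and for such $X$, $\mathbb E_P[X]:=\infty$ if $X$ is not $P$-integrable. For a process $(X_n)$, $X_\infty:=\limsup_n X_n$. A filtration sequence is a family $\mathcal F=(\mathcal F_{m,n})_{m,n\in\mathbb N}$ of sub-$\sigma$-algebras of $\mathcal A$ such that for each $m$, $\mathcal F_{m,\bullet}$ is a filtration; $E$ is adapted if $E_{m,n}$ is $\mathcal F_{m,n}$-measurable. For a filtration $\mathcal G$ and $\rho\in\mathbb N\cup\{\infty\}$, $\mathcal T(\rho,\mathcal G,\mathcal P)$ is the set of $\mathcal G$-stopping times $\tau$ (values in $\mathbb N\cup\{\infty\}$) with $P[\tau\le\rho]=1$ for all $P\in\mathcal P$. For an extended integer sequence $r$, $\mathcal T(r,\mathcal F,\mathcal P)$ is the set of sequences $(\tau_m)$ with $\tau_m\in\mathcal T(r_m,\mathcal F_{m,\bullet},\mathcal P)$. A nonnegative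 adapted process $E$ is an $r$-asymptotic e-process (for $\mathcal P$ and $\mathcal F$) if for every $\tau\in\mathcal T(r,\mathcal F,\mathcal P)$, $\limsup_{m\to\infty}\sup_{P\in\mathcal P}\mathbb E_P[E_{m,\tau_m}]\le 1$. *)

(* Defs.v *)
From HB Require Import structures.
From mathcomp Require Import all_boot all_order all_algebra.
From mathcomp Require Import all_classical all_reals all_analysis measurable_realfun.
Set Implicit Arguments. Unset Strict Implicit. Unset Printing Implicit Defensive.
Import Order.TTheory GRing.Theory Num.Theory.
Local Open Scope classical_set_scope.
Local Open Scope ereal_scope.

(* Extended integers N ∪ {∞} are encoded as [option nat], [None] = ∞. *)
Definition xle (a b : option nat) : Prop :=
  match a, b with
  | _, None => True
  | None, Some _ => False
  | Some i, Some j => (i <= j)%N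
  end.

Section Defs.
Context (d : measure_display) (T : measurableType d) (R : realType).

Definition filtration_seq (F : nat -> nat -> set (set T)) : Prop :=
  (forall m n, sigma_algebra setT (F m n)) /\
  (forall m n A, F m n A -> measurable A) /\
  (forall m n n' A, (n <= n')%N -> F m n A -> F m n' A).

Definition adapted (F : nat -> nat -> set (set T)) (E : nat -> nat -> T -> \bar R)
  : Prop :=
  forall m n (B : set (\bar R)), measurable B -> F m n (E m n @^-1` B).

Definition nonneg_process (E : nat -> nat -> T -> \bar R) : Prop :=
  forall m n x, 0 <= E m n x.

Definition stopping_time (G : nat -> set (set T)) (tau : T -> option nat) : Prop :=
  forall n, G n [set x | xle (tau x) (Some n)].

Definition bounded_stopping_time (G : nat -> set (set T)) (Ps : set (probability T R))
  (rho : option nat) (tau : T -> option nat) : Prop :=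
  stopping_time G tau /\
  forall P, Ps P -> P [set x | xle (tau x) rho] = 1.

Definition stopped (E : nat -> nat -> T -> \bar R) (m : nat) (tau : T -> option nat)
  : T -> \bar R :=
  fun x => match tau x with
           | Some n => E m n x
           | None => limn_esup (fun n => E m n x)
           end.

Definition asymptotic_e_process (Ps : set (probability T R))
  (F : nat -> nat -> set (set T)) (r : nat -> option nat)
  (E : nat -> nat -> T -> \bar R) : Prop :=
  forall tau : nat -> T -> option nat,
    (forall m, bounded_stopping_time (F m) Ps (r m) (tau m)) ->
    limn_esup (fun m =>
      ereal_sup [set \int[P]_x stopped E m (tau m) x | P in Ps]) <= 1.

End Defs.

(* Main.v *)
Require Import Defs.
From HB Require Import structures.
From mathcomp Require Import all_boot all_order all_algebra.
From mathcomp Require Import all_classical all_reals all_analysis measurable_realfun.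
Import Order.TTheory GRing.Theory Num.Theory.
Local Open Scope classical_set_scope.

Lemma esup_le1 (R : realType) (u : (\bar R)^nat) :
  (forall e : R, (0 < e)%R -> exists N, forall m, (N <= m)%N -> (u m <= 1 + e%:E)%E) ->
  (limn_esup u <= 1)%E.
Proof.
move=> H; apply/lee_addgt0Pr => e e0.
have [N HN] := H e e0.
rewrite /limn_esup /limf_esup.
apply: (@le_trans _ _ (ereal_sup (u @` [set m | (N <= m)%N]))).
  apply: ereal_inf_lbound; exists [set m | (N <= m)%N] => //.
  by exists N.
by apply: ge_ereal_sup => _ [m Hm <-]; apply: HN.
Qed.

Lemma esup_lt1 (R : realType) (u : (\bar R)^nat) :
  (limn_esup u <= 1)%E -> forall e : R, (0 < e)%R ->
  exists N, forall m, (N <= m)%N -> (u m < 1 + e%:E)%E.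
Proof.
move=> H e e0.
have : (limn_esup u < 1 + e%:E)%E.
  apply: (le_lt_trans H). by rewrite lteDl.
rewrite /limn_esup /limf_esup => /ereal_inf_lt [_ [V HV <-]] Hs.
case: HV => N _ HN.
exists N => m Nm.
apply: le_lt_trans Hs.
by apply: ereal_sup_ubound; exists m => //; apply: HN.
Qed.

Fixpoint rr (N : nat -> nat) (m : nat) : nat :=
  match m with
  | 0 => 0
  | m'.+1 => if (N (rr N m').+1 <= m'.+1)%N then (rr N m').+1 else rr N m'
  end.

Lemma rr_inv N m : rr N m = 0 \/ (N (rr N m) <= m)%N.
Proof.
elim: m => [|m IH] /=; first by left.
case: ifP => H; first by right.
case: IH => [->|H2]; [by left|right; exact: leqW].
Qed.

Lemma rr_S N m : (rr N m <= rr N m.+1)%N.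
Proof. by rewrite /=; case: ifP. Qed.

Lemma rr_mono N m m' : (m <= m')%N -> (rr N m <= rr N m')%N.
Proof.
elim: m' => [|m' IH]; first by rewrite leqn0 => /eqP ->.
rewrite leq_eqVlt => /orP [/eqP ->//|H].
rewrite ltnS in H; exact: leq_trans (IH H) (rr_S N m').
Qed.

Lemma rr_unb N K : exists m0, (K <= rr N m0)%N.
Proof.
elim: K => [|K [m0 H]]; first by exists 0.
exists (maxn m0 (N K.+1)).+1.
have H1 : (K <= rr N (maxn m0 (N K.+1)))%N.
  exact: leq_trans H (rr_mono N _ _ (leq_maxl m0 (N K.+1))).
rewrite /=; case: ifP => H2 //.
move: H1; rewrite leq_eqVlt => /orP [/eqP H3|//].
by rewrite -H3 (leq_trans (leq_maxr m0 _)) in H2.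
Qed.

Section Main.
Context (d : measure_display) (T : measurableType d) (R : realType)
  (Ps : set (probability T R)) (F : nat -> nat -> set (set T)).

Lemma tau0_bounded m k : filtration_seq F ->
  bounded_stopping_time (F m) Ps k (fun _ => Some 0).
Proof.
move=> [Hs [Hm Hmono]]; split.
  move=> n /=.
  have -> : [set x : T | xle (Some 0) (Some n)] = setT `\` set0.
    by apply/seteqP; split => x //= _; split.
  by case: (Hs m n) => H0 HD _; apply: HD.
move=> P _.
have -> : [set x : T | xle (Some 0) k] = setT.
  by apply/seteqP; split => x //= _; case: k.
exact: probability_setT.
Qed.

Lemma bounded_mono m a b tau : filtration_seq F -> (a <= b)%N ->
  bounded_stopping_time (F m) Ps (Some a) tau ->
  bounded_stopping_time (F m) Ps (Some b) tau.
Proof.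
move=> [Hs [Hm Hmono]] ab [Hst Hb]; split => // P PP.
apply/eqP; rewrite eq_le; apply/andP; split.
  by apply: probability_le1; apply: (Hm m b); apply: Hst.
rewrite -(Hb P PP); apply: le_measure.
- by rewrite inE; apply: (Hm m a); apply: Hst.
- by rewrite inE; apply: (Hm m b); apply: Hst.
move=> x /=; case: (tau x) => //= n na; exact: leq_trans na ab.
Qed.

End Main.

Theorem mainTheorem2 (d : measure_display) (T : measurableType d) (R : realType)
  (Ps : set (probability T R)) (F : nat -> nat -> set (set T))
  (E : nat -> nat -> T -> \bar R) :
  filtration_seq F -> adapted F E -> nonneg_process E ->
  ((forall r : nat -> nat, (exists B, forall m, (r m <= B)%N) ->
      asymptotic_e_process Ps F (fun m => Some (r m)) E)
   <->
   (exists r : nat -> nat, (forall M, \forall m \near \oo, (M <= r m)%N) /\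
      asymptotic_e_process Ps F (fun m => Some (r m)) E)).
Proof.
move=> HF _ _.
set V := fun m tau => ereal_sup [set (\int[P]_x stopped E m tau x)%E | P in Ps].
split.
- move=> Hi.
  have step1 : forall k (e : R), (0 < e)%R -> exists N, forall m, (N <= m)%N ->
      forall tau, bounded_stopping_time (F m) Ps (Some k) tau ->
      (V m tau <= 1 + e%:E)%E.
    move=> k e e0.
    have : forall m, exists tau, bounded_stopping_time (F m) Ps (Some k) tau /\
        ((exists tau', bounded_stopping_time (F m) Ps (Some k) tau' /\
           (1 + e%:E < V m tau')%E) -> (1 + e%:E < V m tau)%E).
      move=> m; case: (pselect (exists tau', bounded_stopping_time (F m) Ps (Some k) tau' /\
           (1 + e%:E < V m tau')%E)) => [[tau' [H1 H2]]|Hn].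
        by exists tau'; split.
      by exists (fun _ => Some 0); split; [exact: tau0_bounded|].
    move=> /choice [tau Htau].
    have := Hi (fun _ => k) (ex_intro _ k (fun _ => leqnn k)) tau (fun m => (Htau m).1).
    move=> /esup_lt1 /(_ e e0) [N HN].
    exists N => m Nm tau' Htau'.
    rewrite leNgt; apply/negP => Hlt.
    have := (Htau m).2 (ex_intro _ tau' (conj Htau' Hlt)).
    by rewrite ltNge (ltW (HN m Nm)).
  have : forall k, exists N, forall m, (N <= m)%N ->
      forall tau, bounded_stopping_time (F m) Ps (Some k) tau ->
      (V m tau <= 1 + ((k.+1%:R)^-1)%:E)%E.
    move=> k; apply: step1; by rewrite invr_gt0 ltr0n.
  move=> /choice [N HN].
  exists (rr N); split.
    move=> M; have [m0 Hm0] := rr_unb N M.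
    exists m0 => // m /= Hm; exact: leq_trans Hm0 (rr_mono N _ _ Hm).
  move=> tau Htau; apply: esup_le1 => e e0.
  pose K := Num.Def.trunc (e^-1).
  have [m0 Hm0] := rr_unb N K.
  exists (maxn m0 (N 0)) => m Hm.
  have Hm' : (N (rr N m) <= m)%N.
    case: (rr_inv N m) => [->|//]; exact: leq_trans (leq_maxr _ _) Hm.
  apply: le_trans (HN _ _ Hm' _ (Htau m)) _.
  rewrite leeD2l // lee_fin.
  have HK : (K <= rr N m)%N by exact: leq_trans Hm0 (rr_mono N _ _ (leq_trans (leq_maxl _ _) Hm)).
  apply: ltW.
  rewrite invf_plt ?posrE ?ltr0n //.
  apply: lt_le_trans (truncnS_gt (e^-1)) _.
  by rewrite ler_nat ltnS.
- move=> [r [Hr Hasy]] r' [B HB] tau Htau.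
  pose tau' := fun m => if (B <= r m)%N then tau m else (fun _ : T => Some 0).
  have Htau' : forall m, bounded_stopping_time (F m) Ps (Some (r m)) (tau' m).
    move=> m; rewrite /tau'; case: ifP => H.
      exact: bounded_mono HF (leq_trans (HB m) H) (Htau m).
    exact: tau0_bounded.
  have := Hasy tau' Htau'.
  move=> H; apply: esup_le1 => e e0.
  have [N1 HN1] := esup_lt1 _ _ H e e0.
  have [N2 _ HN2] := Hr B.
  exists (maxn N1 N2) => m Hm.
  have HBm : (B <= r m)%N by apply: HN2; exact: leq_trans (leq_maxr _ _) Hm.
  have := HN1 m (leq_trans (leq_maxl _ _) Hm).
  by rewrite /tau' HBm => /ltW.
Qed.
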